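(* Assume CH. There exists a set $A\subseteq\mathbb{R}^2$ which is a Hamel basis of $\mathbb{R}^2$ over $\mathbb{Q}$ and such that for every straight line $l\subseteq\mathbb{R}^2$ and every isometry $T:\mathbb{R}\to l$ onto $l$, the set $T^{-1}(A\cap l)$ is a strong Sierpiński subset of $\mathbb{R}$.
   Context: A Sierpiński set is $S\subseteq\mathbb{R}$ with $|S|=\mathfrak{c}$ such that $S\cap N$ is countable for every Lebesgue-null $N\subseteq\mathbb{R}$; it is strong Sierpiński if moreover $S\cap B$ is uncountable for every Borel $B\subseteq\mathbb{R}$ of positive Lebesgue measure. A Hamel basis of $\mathbb{R}^2$ is a basis over $\mathbb{Q}$. *)

(* Defs.v *)
From Stdlib Require Import Reals QArith Qreals List.
Open Scope R_scope.

Definition countable (S : R -> Prop) : Prop :=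
  exists f : R -> nat, forall x y, S x -> S y -> f x = f y -> x = y.

Definition has_card_continuum (S : R -> Prop) : Prop :=
  exists f : R -> R,
    (forall x y, f x = f y -> x = y) /\
    (forall x, S (f x)) /\
    (forall y, S y -> exists x, f x = y).

Definition CH : Prop :=
  forall S : R -> Prop, countable S \/ has_card_continuum S.

Definition interval_cover (a b : nat -> R) (N : R -> Prop) : Prop :=
  (forall n, a n <= b n) /\
  (forall x, N x -> exists n, a n <= x <= b n).

(* Total length of the first n+1 intervals. *)
Definition cover_len (a b : nat -> R) (n : nat) : R :=
  sum_f_R0 (fun k => b k - a k) n.

Definition lebesgue_null (N : R -> Prop) : Prop :=
  forall eps, 0 < eps ->
    exists a b, interval_cover a b N /\ forall n, cover_len a b n < eps.

Definition positive_measure (B : R -> Prop) : Prop :=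
  exists eps, 0 < eps /\
    forall a b, interval_cover a b B -> ~ (forall n, cover_len a b n < eps).

Inductive borel : (R -> Prop) -> Prop :=
  | borel_interval : forall c d : R, borel (fun x => c < x < d)
  | borel_compl : forall B, borel B -> borel (fun x => ~ B x)
  | borel_union : forall F : nat -> R -> Prop,
      (forall n, borel (F n)) -> borel (fun x => exists n, F n x).

Definition sierpinski (S : R -> Prop) : Prop :=
  has_card_continuum S /\
  forall N, lebesgue_null N -> countable (fun x => S x /\ N x).

Definition strong_sierpinski (S : R -> Prop) : Prop :=
  sierpinski S /\
  forall B, borel B -> positive_measure B -> ~ countable (fun x => S x /\ B x).

Definition R2 := (R * R)%type.

Definition dist2 (p q : R2) : R :=
  sqrt ((fst p - fst q)^2 + (snd p - snd q)^2).

Fixpoint lincomb (l : list (Q * R2)) : R2 :=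
  match l with
  | nil => (0, 0)
  | (q, v) :: l' =>
      let s := lincomb l' in (Q2R q * fst v + fst s, Q2R q * snd v + snd s)
  end.

Definition Q_lin_indep (A : R2 -> Prop) : Prop :=
  forall l : list (Q * R2),
    NoDup (map snd l) -> Forall (fun p => A (snd p)) l ->
    lincomb l = (0, 0) -> Forall (fun p => (fst p == 0)%Q) l.

Definition Q_spans (A : R2 -> Prop) : Prop :=
  forall v : R2, exists l : list (Q * R2),
    Forall (fun p => A (snd p)) l /\ lincomb l = v.

Definition hamel_basis (A : R2 -> Prop) : Prop := Q_lin_indep A /\ Q_spans A.

Definition line (p d : R2) : R2 -> Prop :=
  fun z => exists t : R, z = (fst p + t * fst d, snd p + t * snd d).

Definition isometry_onto (T : R -> R2) (L : R2 -> Prop) : Prop :=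
  (forall x y, dist2 (T x) (T y) = Rabs (x - y)) /\
  (forall x, L (T x)) /\
  (forall z, L z -> exists x, T x = z).

(* Main.v *)
Require Import Defs.
From Stdlib Require Import Reals QArith Qreals List.
From Stdlib Require Import Lra Lia Classical ClassicalEpsilon FunctionalExtensionality PropExtensionality Cantor Arith FinFun PArith Wellfounded Rtopology.
Open Scope R_scope.


Definition cnt {T : Type} (S : T -> Prop) : Prop :=
  exists f : T -> nat, forall x y, S x -> S y -> f x = f y -> x = y.

Lemma cnt_sub {T} (S S' : T -> Prop) : cnt S' -> (forall x, S x -> S' x) -> cnt S.
Proof. intros [f Hf] H; exists f; intros x y Hx Hy; apply Hf; auto. Qed.

Lemma cnt_union {T} (S S' : T -> Prop) : cnt S -> cnt S' -> cnt (fun x => S x \/ S' x).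
Proof.
  intros [f Hf] [g Hg].
  exists (fun x => match excluded_middle_informative (S x) with
                   | left _ => 2 * f x | right _ => 2 * g x + 1 end)%nat.
  intros x y Hx Hy.
  destruct (excluded_middle_informative (S x)) as [sx|sx];
  destruct (excluded_middle_informative (S y)) as [sy|sy]; intros E.
  - apply Hf; auto; lia.
  - lia.
  - lia.
  - apply Hg; [destruct Hx; tauto | destruct Hy; tauto | lia].
Qed.

Lemma cnt_single {T} (a : T) : cnt (fun x => x = a).
Proof. exists (fun _ => 0%nat); intros x y -> -> _; reflexivity. Qed.

Lemma cnt_preimage {T U} (S : U -> Prop) (g : T -> U) :
  cnt S -> (forall x y, g x = g y -> x = y) -> cnt (fun x => S (g x)).
Proof. intros [f Hf] Hg; exists (fun x => f (g x)); intros x y Hx Hy E; apply Hg, Hf; auto. Qed.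

Lemma cnt_image {T U} (S : T -> Prop) (g : T -> U) :
  cnt S -> cnt (fun y => exists x, S x /\ y = g x).
Proof.
  intros [f Hf].
  exists (fun y => match excluded_middle_informative (exists x, S x /\ y = g x) with
                   | left H => f (proj1_sig (constructive_indefinite_description _ H))
                   | right _ => 0%nat end).
  intros y1 y2 H1 H2.
  destruct (excluded_middle_informative _) as [e1|]; [|contradiction].
  destruct (excluded_middle_informative _) as [e2|]; [|contradiction].
  destruct (constructive_indefinite_description _ e1) as [x1 [Sx1 E1]].
  destruct (constructive_indefinite_description _ e2) as [x2 [Sx2 E2]]; simpl.
  intros E; subst; f_equal; apply Hf; auto.
Qed.

Lemma cnt_nat {T} (S : T -> Prop) (g : T -> nat) :
  (forall x y, S x -> S y -> g x = g y -> x = y) -> cnt S.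
Proof. intros H; exists g; exact H. Qed.

Definition lsum {T} (len : T -> R) (F : list T) : R :=
  fold_right (fun n s => len n + s) 0 F.

Lemma lsum_app {T} (len : T -> R) F G : lsum len (F ++ G) = lsum len F + lsum len G.
Proof. induction F; simpl; [lra|rewrite IHF; lra]. Qed.

Lemma lsum_nonneg {T} (len : T -> R) F : (forall n, 0 <= len n) -> 0 <= lsum len F.
Proof. intros H; induction F; simpl; [lra|specialize (H a); lra]. Qed.

Lemma lsum_sub {T} (len : T -> R) (F G : list T) :
  (forall n, 0 <= len n) -> NoDup F -> incl F G -> lsum len F <= lsum len G.
Proof.
  intros Hpos HF; revert G; induction HF as [|x F' Hx HF' IH]; intros G HI.
  - simpl; apply lsum_nonneg; auto.
  - assert (Hin : In x G) by (apply HI; left; auto).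
    destruct (in_split _ _ Hin) as [G1 [G2 ->]].
    rewrite lsum_app; simpl.
    assert (IH' : lsum len F' <= lsum len (G1 ++ G2)).
    { apply IH; intros y Hy.
      assert (In y (G1 ++ x :: G2)) by (apply HI; right; auto).
      apply in_app_or in H; apply in_or_app; destruct H as [H|[H|H]]; auto.
      subst; contradiction. }
    rewrite lsum_app in IH'; lra.
Qed.

Lemma sum_f_lsum (len : nat -> R) M : sum_f_R0 len M = lsum len (seq 0 (S M)).
Proof.
  induction M; [simpl; lra|].
  replace (sum_f_R0 len (S M)) with (sum_f_R0 len M + len (S M)) by reflexivity.
  rewrite IHM, (seq_S (S M) 0), lsum_app. simpl. lra.
Qed.

Lemma lsum_le_prefix (len : nat -> R) F M :
  (forall n, 0 <= len n) -> NoDup F -> (forall n, In n F -> (n <= M)%nat) ->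
  lsum len F <= sum_f_R0 len M.
Proof.
  intros Hp HF HM; rewrite sum_f_lsum; apply lsum_sub; auto.
  intros n Hn; apply in_seq; specialize (HM n Hn); lia.
Qed.

Lemma list_bound (F : list nat) : exists M, forall n, In n F -> (n <= M)%nat.
Proof.
  induction F as [|a F [M HM]]; [exists 0%nat; intros n []|].
  exists (Nat.max a M); intros n [->|H]; [lia|specialize (HM n H); lia].
Qed.

Definition small (N : R -> Prop) : Prop :=
  forall eps, 0 < eps -> exists a b : nat -> R,
    (forall n, a n <= b n) /\ (forall x, N x -> exists n, a n <= x <= b n) /\
    forall F, NoDup F -> lsum (fun n => b n - a n) F <= eps.

Lemma small_sub (N M : R -> Prop) : small M -> (forall x, N x -> M x) -> small N.
Proof.
  intros H HNM eps Heps; destruct (H eps Heps) as [a [b [H1 [H2 H3]]]].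
  exists a, b; repeat split; auto.
Qed.

Lemma null_small N : lebesgue_null N -> small N.
Proof.
  intros H eps Heps; destruct (H eps Heps) as [a [b [[H1 H2] H3]]].
  exists a, b; repeat split; auto.
  intros F HF; destruct (list_bound F) as [M HM].
  apply Rle_trans with (cover_len a b M).
  - apply lsum_le_prefix; auto; intros n; specialize (H1 n); lra.
  - left; apply H3.
Qed.

Lemma posm_not_small B N : positive_measure B -> small N -> ~ (forall x, B x -> N x).
Proof.
  intros [eps [Heps HB]] HN Hsub.
  destruct (HN (eps/2)) as [a [b [H1 [H2 H3]]]]; [lra|].
  apply (HB a b); [split; auto|].
  intros n; unfold cover_len; rewrite sum_f_lsum.
  specialize (H3 (seq 0 (S n)) (seq_NoDup _ _)); lra.
Qed.


Lemma sum_delta_out (g : nat -> R) k0 K : (K < k0)%nat ->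
  sum_f_R0 (fun k => if Nat.eqb k0 k then g k else 0) K = 0.
Proof.
  intros H; induction K.
  - simpl; destruct (Nat.eqb_spec k0 0); [lia|reflexivity].
  - replace (sum_f_R0 _ (S K)) with (sum_f_R0 (fun k => if Nat.eqb k0 k then g k else 0) K +
       (if Nat.eqb k0 (S K) then g (S K) else 0)) by reflexivity.
    rewrite IHK by lia; destruct (Nat.eqb_spec k0 (S K)); [lia|lra].
Qed.

Lemma sum_delta (g : nat -> R) k0 K : (k0 <= K)%nat ->
  sum_f_R0 (fun k => if Nat.eqb k0 k then g k else 0) K = g k0.
Proof.
  intros H; induction K.
  - assert (k0 = 0%nat) by lia; subst; reflexivity.
  - replace (sum_f_R0 _ (S K)) with (sum_f_R0 (fun k => if Nat.eqb k0 k then g k else 0) K +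
       (if Nat.eqb k0 (S K) then g (S K) else 0)) by reflexivity.
    destruct (Nat.eqb_spec k0 (S K)).
    + subst; rewrite sum_delta_out by lia; lra.
    + rewrite IHK by lia; lra.
Qed.

Lemma sum_zero K : sum_f_R0 (fun _ => 0) K = 0.
Proof. induction K; simpl; [lra|rewrite IHK; lra]. Qed.

Definition Jk (k : nat) (G : list (nat*nat)) : list nat :=
  map snd (filter (fun p => Nat.eqb (fst p) k) G).

Lemma psum_group (h : nat * nat -> R) G K : (forall p, In p G -> (fst p <= K)%nat) ->
  lsum h G = sum_f_R0 (fun k => lsum (fun j => h (k, j)) (Jk k G)) K.
Proof.
  induction G as [|p G IH]; intros HK.
  - unfold Jk; simpl; rewrite sum_zero; reflexivity.
  - simpl lsum at 1. rewrite IH by (intros; apply HK; right; auto).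
    transitivity (sum_f_R0 (fun k => (if Nat.eqb (fst p) k then h (k, snd p) else 0) +
                                   lsum (fun j => h (k, j)) (Jk k G)) K).
    + rewrite sum_plus. rewrite (sum_delta (fun k => h (k, snd p))) by (apply HK; left; auto).
      destruct p; reflexivity.
    + apply sum_eq; intros k _. unfold Jk; simpl.
      destruct (Nat.eqb_spec (fst p) k); simpl; [subst; destruct p; reflexivity|lra].
Qed.

Lemma Jk_NoDup k G : NoDup G -> NoDup (Jk k G).
Proof.
  unfold Jk; induction 1 as [|p G Hp HG IH]; simpl; [constructor|].
  destruct (Nat.eqb_spec (fst p) k); simpl; auto.
  constructor; auto.
  intros Hin; apply in_map_iff in Hin; destruct Hin as [q [Eq Hq]].
  apply filter_In in Hq; destruct Hq as [Hq Hk]; apply Nat.eqb_eq in Hk.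
  apply Hp; replace p with q; auto; destruct p, q; simpl in *; subst; reflexivity.
Qed.

Lemma geom_sum eps K : sum_f_R0 (fun k => eps / 2 ^ (k + 2)) K = eps / 2 - eps / 2 ^ (K + 2).
Proof.
  induction K.
  - simpl; field.
  - replace (sum_f_R0 _ (S K)) with (sum_f_R0 (fun k => eps / 2 ^ (k + 2)) K + eps / 2 ^ (S K + 2)) by reflexivity.
    rewrite IHK. replace (S K + 2)%nat with (S (K + 2)) by lia. simpl.
    field; apply pow_nonzero; lra.
Qed.

Lemma small_union (N : nat -> R -> Prop) : (forall n, small (N n)) -> small (fun x => exists n, N n x).
Proof.
  intros HN eps Heps.
  assert (Hc : forall n, { ab : (nat -> R) * (nat -> R) |
     (forall m, fst ab m <= snd ab m) /\ (forall x, N n x -> exists m, fst ab m <= x <= snd ab m) /\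
     forall F, NoDup F -> lsum (fun m => snd ab m - fst ab m) F <= eps / 2 ^ (n + 2) }).
  { intros n; apply constructive_indefinite_description.
    assert (0 < eps / 2 ^ (n + 2)) by (apply Rdiv_lt_0_compat; [lra|apply pow_lt; lra]).
    destruct (HN n _ H) as [a [b Hab]]; exists (a, b); exact Hab. }
  set (a := fun m => fst (proj1_sig (Hc (fst (of_nat m)))) (snd (of_nat m))).
  set (b := fun m => snd (proj1_sig (Hc (fst (of_nat m)))) (snd (of_nat m))).
  exists a, b; split; [|split].
  - intros m; unfold a, b; pose proof (proj2_sig (Hc (fst (of_nat m)))) as [H1 _]; apply H1.
  - intros x [n Hx]; pose proof (proj2_sig (Hc n)) as [_ [H2 _]].
    destruct (H2 x Hx) as [j Hj]; exists (to_nat (n, j)).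
    unfold a, b; rewrite cancel_of_to; simpl; exact Hj.
  - intros F HF.
    set (h := fun p : nat * nat => snd (proj1_sig (Hc (fst p))) (snd p) - fst (proj1_sig (Hc (fst p))) (snd p)).
    assert (E1 : lsum (fun m => b m - a m) F = lsum h (map of_nat F)).
    { clear HF; induction F; simpl; [reflexivity|rewrite IHF; reflexivity]. }
    rewrite E1.
    assert (HG : NoDup (map of_nat F)).
    { apply FinFun.Injective_map_NoDup; auto. intros x y; apply of_nat_inj. }
    destruct (list_bound (map fst (map of_nat F))) as [K HK].
    rewrite (psum_group h _ K) by (intros p Hp; apply HK, in_map; auto).
    apply Rle_trans with (sum_f_R0 (fun k => eps / 2 ^ (k + 2)) K).
    + apply sum_Rle; intros k _.
      unfold h; simpl. pose proof (proj2_sig (Hc k)) as [_ [_ H3]].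
      apply H3, Jk_NoDup, HG.
    + rewrite geom_sum. assert (0 < eps / 2 ^ (K + 2)) by (apply Rdiv_lt_0_compat; [lra|apply pow_lt; lra]).
      lra.
Qed.

Lemma small_subsingleton (P : R -> Prop) : (forall x y, P x -> P y -> x = y) -> small P.
Proof.
  intros H eps Heps.
  destruct (classic (exists x, P x)) as [[x0 Hx0]|Hn].
  - exists (fun _ => x0), (fun _ => x0); split; [intros; lra|split].
    + intros x Hx; exists 0%nat; rewrite (H x x0 Hx Hx0); lra.
    + intros F _; induction F; simpl; lra.
  - exists (fun _ => 0), (fun _ => 0); split; [intros; lra|split].
    + intros x Hx; exfalso; eauto.
    + intros F _; induction F; simpl; lra.
Qed.

Lemma small_union2 (N M : R -> Prop) : small N -> small M -> small (fun x => N x \/ M x).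
Proof.
  intros HN HM.
  apply small_sub with (fun x => exists n, (fun n => if Nat.eqb n 0 then N else M) n x).
  - apply small_union; intros [|n]; simpl; auto.
  - intros x [H|H]; [exists 0%nat|exists 1%nat]; auto.
Qed.

Lemma small_cnt_union {I} (S : I -> Prop) (N : I -> R -> Prop) :
  cnt S -> (forall i, S i -> small (N i)) -> small (fun x => exists i, S i /\ N i x).
Proof.
  intros [g Hg] HN.
  apply small_sub with (fun x => exists n, (fun n x => exists i, S i /\ g i = n /\ N i x) n x).
  - apply small_union; intros n.
    destruct (classic (exists i, S i /\ g i = n)) as [[i [Si Ei]]|Hn].
    + apply small_sub with (N i); [apply HN; auto|].
      intros x [j [Sj [Ej Hj]]]; replace i with j; auto; apply Hg; auto; congruence.
    + apply small_subsingleton; intros x y [i [Si [Ei _]]]; exfalso; eauto.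
  - intros x [i [Si Hi]]; exists (g i), i; auto.
Qed.

Lemma small_cnt (P : R -> Prop) : cnt P -> small P.
Proof.
  intros Hc; apply small_sub with (fun x => exists i, P i /\ x = i).
  - apply small_cnt_union; auto; intros i _; apply small_subsingleton; intros; congruence.
  - intros x Hx; exists x; auto.
Qed.

Lemma small_affine (N : R -> Prop) s c : small N -> (s = 1 \/ s = -1) -> small (fun t => N (s * t + c)).
Proof.
  intros HN Hs eps Heps; destruct (HN eps Heps) as [a [b [H1 [H2 H3]]]].
  destruct Hs as [->| ->].
  - exists (fun n => a n - c), (fun n => b n - c); split; [intros n; specialize (H1 n); lra|split].
    + intros x Hx; destruct (H2 _ Hx) as [n Hn]; exists n; lra.
    + intros F HF; specialize (H3 F HF).
      replace (lsum (fun n => b n - c - (a n - c)) F) with (lsum (fun n => b n - a n) F); auto.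
      clear; induction F; simpl; [reflexivity|rewrite IHF; f_equal; ring].
  - exists (fun n => c - b n), (fun n => c - a n); split; [intros n; specialize (H1 n); lra|split].
    + intros x Hx; destruct (H2 _ Hx) as [n Hn]; exists n; lra.
    + intros F HF; specialize (H3 F HF).
      replace (lsum (fun n => c - a n - (c - b n)) F) with (lsum (fun n => b n - a n) F); auto.
      clear; induction F; simpl; [reflexivity|rewrite IHF; f_equal; ring].
Qed.


Lemma finite_cover (c d : nat -> R) : (forall n, c n < d n) ->
  forall k (L : list nat), length L = k -> NoDup L -> forall x y, x <= y ->
  (forall z, x <= z <= y -> exists n, In n L /\ c n < z < d n) ->
  y - x <= lsum (fun n => d n - c n) L.
Proof.
  intros Hcd k; induction k as [k IH] using lt_wf_ind; intros L HL HN x y Hxy Hcov.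
  destruct (Hcov y (conj Hxy (Rle_refl y))) as [j [Hj Hy]].
  destruct (in_split _ _ Hj) as [L1 [L2 ->]].
  rewrite lsum_app; simpl.
  assert (Hnn : forall L, 0 <= lsum (fun n => d n - c n) L)
    by (intros; apply lsum_nonneg; intros n; specialize (Hcd n); lra).
  destruct (Rlt_or_le (c j) x) as [Hlt|Hle].
  - pose proof (Hnn L1); pose proof (Hnn L2); lra.
  - assert (IH' : c j - x <= lsum (fun n => d n - c n) (L1 ++ L2)).
    { apply (IH (length (L1 ++ L2))); auto.
      - rewrite <- HL, !length_app; simpl; lia.
      - eapply NoDup_remove_1; eauto.
      - intros z Hz; destruct (Hcov z) as [n [Hn Hzn]]; [lra|].
        exists n; split; auto.
        apply in_app_or in Hn; apply in_or_app; destruct Hn as [H|[H|H]]; auto.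
        subst; lra. }
    rewrite lsum_app in IH'; lra.
Qed.

Definition idx (r : R) : nat := epsilon (inhabits 0%nat) (fun n => r = INR n).

Lemma idx_INR n : idx (INR n) = n.
Proof.
  unfold idx; apply INR_eq; symmetry.
  apply (epsilon_spec (inhabits 0%nat) (fun m => INR n = INR m)); exists n; auto.
Qed.

Lemma cover01 (a b : nat -> R) : interval_cover a b (fun x => 0 <= x <= 1) ->
  exists n, 3/4 <= cover_len a b n.
Proof.
  intros [Hab Hcov].
  set (dl := fun n : nat => 1 / 2 ^ (n + 4)).
  assert (Hdl : forall n, 0 < dl n) by (intros; unfold dl; apply Rdiv_lt_0_compat; [lra|apply pow_lt; lra]).
  set (c := fun n => a n - dl n). set (d := fun n => b n + dl n).
  assert (Hcd : forall n, c n < d n) by (intros n; unfold c, d; specialize (Hab n); specialize (Hdl n); lra).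
  assert (Hcf : forall x : R, (exists y, (fun r z => exists n, r = INR n /\ c n < z < d n) x y) ->
                              (fun r => exists n : nat, r = INR n) x).
  { intros x [y [n [-> _]]]; exists n; auto. }
  set (fam := mkfamily (fun r => exists n : nat, r = INR n) (fun r z => exists n, r = INR n /\ c n < z < d n) Hcf).
  assert (Hop : covering_open_set (fun z => 0 <= z <= 1) fam).
  { split.
    - intros z Hz; destruct (Hcov z Hz) as [n Hn]; exists (INR n); simpl; exists n; split; auto.
      specialize (Hdl n); unfold c, d; lra.
    - intros r z [n [-> Hz]].
      assert (Hpos : 0 < Rmin (z - c n) (d n - z)) by (apply Rmin_pos; lra).
      exists (mkposreal _ Hpos); intros w Hw; unfold disc in Hw; simpl in Hw.
      exists n; split; auto.
      pose proof (Rmin_l (z - c n) (d n - z)); pose proof (Rmin_r (z - c n) (d n - z)).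
      apply Rabs_def2 in Hw; lra. }
  destruct (compact_P3 0 1 fam Hop) as [D [Hfc [l Hl]]].
  set (L := nodup Nat.eq_dec (map idx l)).
  assert (HL : forall z, 0 <= z <= 1 -> exists n, In n L /\ c n < z < d n).
  { intros z Hz; destruct (Hfc z Hz) as [r [[n [-> Hn]] HD]].
    exists n; split; auto. unfold L; apply nodup_In.
    rewrite <- (idx_INR n); apply in_map, Hl; split; auto; exists n; auto. }
  assert (H1 := finite_cover c d Hcd (length L) L eq_refl (NoDup_nodup _ _) 0 1 ltac:(lra) HL).
  destruct (list_bound L) as [M HM].
  exists M.
  assert (E : lsum (fun n => d n - c n) L = lsum (fun n => b n - a n) L + lsum (fun n => 2 * dl n) L).
  { clear; induction L; simpl; [lra|rewrite IHL; unfold c, d; lra]. }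
  assert (H2 : lsum (fun n => b n - a n) L <= cover_len a b M).
  { apply lsum_le_prefix; auto; [intros n; specialize (Hab n); lra|apply NoDup_nodup]. }
  assert (H3 : lsum (fun n => 2 * dl n) L <= sum_f_R0 (fun k => (1/2) / 2 ^ (k + 2)) M).
  { replace (fun n => 2 * dl n) with (fun k => (1/2) / 2 ^ (k + 2)).
    - apply lsum_le_prefix; auto; [|apply NoDup_nodup].
      intros n; apply Rlt_le, Rdiv_lt_0_compat; [lra|apply pow_lt; lra].
    - apply functional_extensionality; intros n; unfold dl.
      replace (n + 4)%nat with (S (S (n + 2))) by lia; simpl; field; apply pow_nonzero; lra. }
  rewrite geom_sum in H3.
  assert (0 < (1/2) / 2 ^ (M + 2)) by (apply Rdiv_lt_0_compat; [lra|apply pow_lt; lra]).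
  lra.
Qed.

Definition fullR : R -> Prop := fun x => ~ (1 < x < 0).

Lemma fullR_borel : borel fullR.
Proof. apply borel_compl, borel_interval. Qed.

Lemma fullR_posm : positive_measure fullR.
Proof.
  exists (1/2); split; [lra|].
  intros a b Hc Hlt.
  destruct (cover01 a b) as [n Hn].
  - destruct Hc as [H1 H2]; split; auto; intros x Hx; apply H2; unfold fullR; lra.
  - specialize (Hlt n); lra.
Qed.

Lemma R_not_small N : small N -> exists x, ~ N x.
Proof.
  intros HN; apply NNPP; intros Hn.
  apply (posm_not_small fullR N fullR_posm HN).
  intros x _; apply NNPP; intros H; apply Hn; exists x; auto.
Qed.

Lemma posm_pick B N : positive_measure B -> small N -> exists x, B x /\ ~ N x.
Proof.
  intros HB HN; apply NNPP; intros Hn.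
  apply (posm_not_small B N HB HN).
  intros x Hx; apply NNPP; intros H; apply Hn; exists x; auto.
Qed.


Definition vadd (x y : R2) : R2 := (fst x + fst y, snd x + snd y).
Definition vscal (r : R) (x : R2) : R2 := (r * fst x, r * snd x).

Ltac peq := apply injective_projections; simpl; try ring.

Definition spanS (X : R2 -> Prop) (v : R2) : Prop :=
  exists l, Forall (fun p => X (snd p)) l /\ lincomb l = v.

Lemma lincomb_app l1 l2 : lincomb (l1 ++ l2) = vadd (lincomb l1) (lincomb l2).
Proof.
  induction l1 as [|[q v] l IH]; simpl.
  - unfold vadd; simpl; peq.
  - rewrite IH; unfold vadd; simpl; peq.
Qed.

Lemma Q2R_1 : Q2R 1 = 1.
Proof. unfold Q2R; simpl; field. Qed.

Lemma Q2R_0 : Q2R 0 = 0.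
Proof. unfold Q2R; simpl; field. Qed.

Lemma span_in X z : X z -> spanS X z.
Proof. intros H; exists ((1%Q, z) :: nil); split; [repeat constructor; auto|simpl; rewrite Q2R_1; peq]. Qed.

Lemma span_zero X : spanS X (0, 0).
Proof. exists nil; split; auto. Qed.

Lemma span_add X v w : spanS X v -> spanS X w -> spanS X (vadd v w).
Proof.
  intros [l1 [H1 E1]] [l2 [H2 E2]]; exists (l1 ++ l2); split.
  - apply Forall_app; auto.
  - rewrite lincomb_app; congruence.
Qed.

Lemma span_scal X q v : spanS X v -> spanS X (vscal (Q2R q) v).
Proof.
  intros [l [H E]]; exists (map (fun p => (q * fst p, snd p)%Q) l); split.
  - apply Forall_map; eapply Forall_impl; [|exact H]; auto.
  - subst; induction l as [|[q' w] l IH]; simpl; [unfold vscal; simpl; peq|].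
    inversion H; subst; rewrite IH by auto; unfold vscal; simpl; rewrite Q2R_mult; peq.
Qed.

Lemma span_mono (X Y : R2 -> Prop) v : (forall w, X w -> Y w) -> spanS X v -> spanS Y v.
Proof.
  intros HXY [l [H E]]; exists l; split; auto; eapply Forall_impl; [|exact H]; auto.
Qed.

Lemma span_exchange X z v : spanS (fun w => X w \/ w = z) v ->
  exists s q, spanS X s /\ v = vadd s (vscal (Q2R q) z).
Proof.
  intros [l [H E]]; subst v; induction l as [|[q w] l IH].
  - exists (0, 0), 0%Q; split; [apply span_zero|rewrite Q2R_0; unfold vadd, vscal; simpl; peq].
  - inversion H; subst. destruct (IH H3) as [s [q' [Hs Es]]].
    simpl in H2; destruct H2 as [Hw| ->].
    + exists (vadd (vscal (Q2R q) w) s), q'; split.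
      * apply span_add; auto. apply span_scal, span_in; auto.
      * simpl; rewrite Es; unfold vadd, vscal; simpl; peq.
    + exists s, (q + q')%Q; split; auto.
      simpl; rewrite Es, Q2R_plus; unfold vadd, vscal; simpl; peq.
Qed.

Definition vsub (v z : R2) : R2 := (fst v - fst z, snd v - snd z).

Lemma vec_exchange D v z :
  ~ spanS D v -> ~ spanS (fun w => D w \/ w = v) z -> ~ spanS (fun w => D w \/ w = z) (vsub v z).
Proof.
  intros Hv Hz H; destruct (span_exchange _ _ _ H) as [s [q [Hs E]]].
  destruct (Qeq_dec (q + 1) 0) as [Hq|Hq].
  - apply Hv. replace v with s; auto.
    apply Qeq_eqR in Hq; rewrite Q2R_plus, Q2R_1, Q2R_0 in Hq.
    destruct v, z, s; unfold vsub, vadd, vscal in E; simpl in *.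
    injection E; intros E2 E1. f_equal; nra.
  - apply Hz.
    assert (Hr : Q2R (q + 1) <> 0) by (intros C; apply Hq, eqR_Qeq; rewrite C, Q2R_0; reflexivity).
    rewrite Q2R_plus, Q2R_1 in Hr.
    replace z with (vadd (vscal (Q2R (/ (q + 1))) v) (vscal (Q2R (- / (q+1))) s)).
    + apply span_add; apply span_scal; [apply span_in; auto|].
      eapply span_mono; [|exact Hs]; auto.
    + rewrite Q2R_opp, Q2R_inv, Q2R_plus, Q2R_1 by auto.
      destruct v, z, s; unfold vsub, vadd, vscal in E; simpl in *.
      injection E; intros E2 E1. unfold vadd, vscal; simpl. f_equal; field_simplify_eq; auto; nra.
Qed.


Arguments to_nat : simpl never.

Definition encZ (z : Z) : nat :=
  match z with Z0 => 0 | Zpos p => 2 * Pos.to_nat p | Zneg p => 2 * Pos.to_nat p + 1 end%nat.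

Lemma encZ_inj z1 z2 : encZ z1 = encZ z2 -> z1 = z2.
Proof.
  destruct z1 as [|p1|p1], z2 as [|p2|p2]; simpl; intros H;
  try (pose proof (Pos2Nat.is_pos p1)); try (pose proof (Pos2Nat.is_pos p2)); try lia;
  f_equal; apply Pos2Nat.inj; lia.
Qed.

Definition encQ (q : Q) : nat := to_nat (encZ (Qnum q), Pos.to_nat (Qden q)).

Lemma encQ_inj q1 q2 : encQ q1 = encQ q2 -> q1 = q2.
Proof.
  unfold encQ; intros H; apply to_nat_inj in H; injection H; intros H2 H1.
  destruct q1, q2; simpl in *; f_equal; [apply encZ_inj|apply Pos2Nat.inj]; auto.
Qed.

Fixpoint encL (l : list (Q * nat)) : nat :=
  match l with nil => 0%nat | x :: l' => S (to_nat (to_nat (encQ (fst x), snd x), encL l')) end.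

Lemma encL_inj l1 l2 : encL l1 = encL l2 -> l1 = l2.
Proof.
  revert l2; induction l1 as [|[q n] l1 IH]; intros [|[q' n'] l2]; simpl; try discriminate; auto.
  intros H; injection H; intros H'; apply to_nat_inj in H'; injection H'; intros E2 E1.
  apply to_nat_inj in E1; injection E1; intros; f_equal; [f_equal|]; auto; apply encQ_inj; auto.
Qed.

Lemma cnt_span X : cnt X -> cnt (spanS X).
Proof.
  intros [f Hf].
  apply cnt_sub with (fun y => exists l, (fun l => Forall (fun p => X (snd p)) l) l /\ y = lincomb l).
  - apply cnt_image. exists (fun l => encL (map (fun p => (fst p, f (snd p))) l)).
    intros l1 l2 H1 H2 E; apply encL_inj in E. revert l2 H2 E; induction l1 as [|[q v] l1 IH]; intros [|[q' v'] l2];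
      simpl; try discriminate; auto.
    intros H2 E; injection E; intros E3 E2 E1; inversion H1; inversion H2; subst.
    f_equal; [f_equal; apply Hf; auto|apply IH; auto].
  - intros y [l [H E]]; exists l; auto.
Qed.

Section Indep.
Variable K : Type.
Variable A : R2 -> Prop.
Variable At : R2 -> K -> Prop.
Variable lt : K -> K -> Prop.
Hypothesis HA : forall z, A z -> exists k, At z k.
Hypothesis Hfun : forall z w k, At z k -> At w k -> z = w.
Hypothesis Htri : forall k1 k2, lt k1 k2 \/ k1 = k2 \/ lt k2 k1.
Hypothesis Htr : forall k1 k2 k3, lt k1 k2 -> lt k2 k3 -> lt k1 k3.
Hypothesis Hnew : forall z k, At z k -> ~ spanS (fun w => exists k', At w k' /\ lt k' k) z.

Lemma max_elem (l : list R2) : l <> nil -> (forall w, In w l -> A w) ->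
  exists m k, In m l /\ At m k /\ forall w, In w l -> w <> m -> exists k', At w k' /\ lt k' k.
Proof.
  induction l as [|x l IH]; intros Hne HAl; [congruence|].
  destruct (HA x) as [kx Hkx]; [apply HAl; left; auto|].
  destruct l as [|y l'].
  - exists x, kx; split; [left; auto|split; auto]. intros w [->|[]]; congruence.
  - destruct IH as [m [k [Hm [Hk Hmax]]]]; [congruence|intros; apply HAl; right; auto|].
    destruct (Htri kx k) as [Hl|[He|Hg]].
    + exists m, k; split; [right; auto|split; auto].
      intros w [<-|Hw] Hwm; [exists kx; auto|apply Hmax; auto].
    + subst; exists m, k; split; [right; auto|split; auto].
      intros w [<-|Hw] Hwm; [exfalso; apply Hwm; eapply Hfun; eauto|apply Hmax; auto].
    + exists x, kx; split; [left; auto|split; auto].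
      intros w [<-|Hw] Hwm; [congruence|].
      destruct (classic (w = m)) as [->|Hne']; [exists k; auto|].
      destruct (Hmax w Hw Hne') as [k' [Hk' Hlt]]; exists k'; split; eauto.
Qed.

Lemma indep_rank : Q_lin_indep A.
Proof.
  intros l; remember (length l) as n; revert l Heqn; induction n as [|n IH]; intros l Hn Hnd HAl E.
  - destruct l; [constructor|simpl in Hn; discriminate].
  - assert (Hne : map snd l <> nil) by (destruct l; simpl in *; congruence).
    destruct (max_elem (map snd l) Hne) as [m [k [Hm [Hk Hmax]]]].
    { intros w Hw; apply in_map_iff in Hw; destruct Hw as [p [<- Hp]].
      rewrite Forall_forall in HAl; apply HAl; auto. }
    apply in_map_iff in Hm; destruct Hm as [[q m'] [Em Hqm]]; simpl in Em; subst m'.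
    destruct (in_split _ _ Hqm) as [l1 [l2 ->]].
    rewrite map_app in Hnd; simpl in Hnd.
    assert (Hnd' := NoDup_remove_1 _ _ _ Hnd). assert (Hnm := NoDup_remove_2 _ _ _ Hnd).
    rewrite lincomb_app in E; simpl in E.
    destruct (Qeq_dec q 0) as [Hq|Hq].
    + assert (E' : lincomb (l1 ++ l2) = (0, 0)).
      { rewrite lincomb_app. apply Qeq_eqR in Hq; rewrite Q2R_0 in Hq; rewrite Hq in E.
        unfold vadd in *; simpl in *. destruct (lincomb l1), (lincomb l2); simpl in *.
        injection E; intros; f_equal; lra. }
      assert (IH' := IH (l1 ++ l2)).
      rewrite length_app in Hn; simpl in Hn.
      specialize (IH' ltac:(rewrite length_app; lia) ltac:(rewrite map_app; auto)).
      assert (HAl' : Forall (fun p => A (snd p)) (l1 ++ l2)).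
      { apply Forall_app in HAl; destruct HAl as [H1 H2]; inversion H2; apply Forall_app; auto. }
      specialize (IH' HAl' E'). apply Forall_app in IH'; destruct IH' as [I1 I2].
      apply Forall_app; split; auto.
    + exfalso. apply (Hnew m k Hk).
      assert (Hr : Q2R q <> 0) by (intros C; apply Hq, eqR_Qeq; rewrite C, Q2R_0; reflexivity).
      replace m with (vscal (Q2R (- / q)) (lincomb (l1 ++ l2))).
      * apply span_scal. exists (l1 ++ l2); split; auto.
        apply Forall_forall; intros [q' w] Hw; simpl.
        apply Hmax; [rewrite map_app; apply in_or_app; apply in_app_or in Hw; destruct Hw; [left|right; right];
                     apply in_map with (f := snd) in H; auto|].
        intros ->; apply Hnm; rewrite <- map_app; apply in_map with (f := snd) in Hw; auto.
      * rewrite Q2R_opp, Q2R_inv by auto. rewrite lincomb_app.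
        unfold vadd, vscal in *; simpl in *. destruct (lincomb l1), (lincomb l2), m; simpl in *.
        injection E; intros E2 E1. f_equal; field_simplify_eq; auto; lra.
Qed.
End Indep.


Definition pt (c u : R2) (t : R) : R2 := (fst c + t * fst u, snd c + t * snd u).
Definition unitv (u : R2) : Prop := fst u * fst u + snd u * snd u = 1.

Lemma pt_inj c u t1 t2 : unitv u -> pt c u t1 = pt c u t2 -> t1 = t2.
Proof.
  unfold unitv, pt; intros Hu E; injection E; intros E2 E1.
  destruct (Req_dec t1 t2) as [|Hne]; auto.
  assert (fst u = 0) by (apply (Rmult_eq_reg_l (t1 - t2)); [lra|lra]).
  assert (snd u = 0) by (apply (Rmult_eq_reg_l (t1 - t2)); [lra|lra]).
  rewrite H, H0 in Hu; lra.
Qed.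

Lemma dist2_sq p q r : dist2 p q = r -> (fst p - fst q) ^ 2 + (snd p - snd q) ^ 2 = r * r.
Proof.
  unfold dist2; intros <-. rewrite sqrt_sqrt; [ring|].
  apply Rplus_le_le_0_compat; apply pow2_ge_0.
Qed.

Lemma isometry_affine (T : R -> R2) : (forall x y, dist2 (T x) (T y) = Rabs (x - y)) ->
  unitv (vsub (T 1) (T 0)) /\ forall x, T x = pt (T 0) (vsub (T 1) (T 0)) x.
Proof.
  intros H.
  assert (H10 := dist2_sq _ _ _ (H 1 0)).
  replace (Rabs (1 - 0) * Rabs (1 - 0)) with 1 in H10 by (rewrite Rminus_0_r, Rabs_R1; ring).
  split.
  - unfold unitv, vsub; simpl; lra.
  - intros x.
    assert (Hx0 := dist2_sq _ _ _ (H x 0)). assert (Hx1 := dist2_sq _ _ _ (H x 1)).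
    assert (Hsq : forall r, Rabs r * Rabs r = r * r)
      by (intros r; rewrite <- Rabs_mult; apply Rabs_pos_eq; nra).
    rewrite Hsq in Hx0, Hx1.
    destruct (T 0) as [p0 q0], (T 1) as [p1 q1], (T x) as [px qx]; unfold pt, vsub; cbn [fst snd] in *.
    set (a1 := p1 - p0) in *. set (a2 := q1 - q0) in *.
    set (b1 := px - p0) in *. set (b2 := qx - q0) in *.
    assert (Hx1' : (b1 - a1) ^ 2 + (b2 - a2) ^ 2 = (x - 1) * (x - 1))
      by (rewrite <- Hx1; unfold a1, a2, b1, b2; ring).
    assert (Hab : a1 * b1 + a2 * b2 = x).
    { assert (E : (b1 - a1) ^ 2 + (b2 - a2) ^ 2 = (b1 ^ 2 + b2 ^ 2) + (a1 ^ 2 + a2 ^ 2) - 2 * (a1 * b1 + a2 * b2)) by ring.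
      rewrite E, Hx0, H10 in Hx1'. lra. }
    assert (Z : (b1 - x * a1) ^ 2 + (b2 - x * a2) ^ 2 = 0).
    { replace ((b1 - x * a1) ^ 2 + (b2 - x * a2) ^ 2) with
        ((b1 ^ 2 + b2 ^ 2) - 2 * x * (a1 * b1 + a2 * b2) + x * x * (a1 ^ 2 + a2 ^ 2)) by ring.
      rewrite Hx0, Hab, H10; ring. }
    pose proof (pow2_ge_0 (b1 - x * a1)); pose proof (pow2_ge_0 (b2 - x * a2)).
    assert (Z1 : b1 - x * a1 = 0) by (apply Rsqr_0_uniq; unfold Rsqr; simpl in *; lra).
    assert (Z2 : b2 - x * a2 = 0) by (apply Rsqr_0_uniq; unfold Rsqr; simpl in *; lra).
    unfold a1, a2, b1, b2 in *; f_equal; lra.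
Qed.

Lemma line_inter_small (N : R -> Prop) c u c' u' : small N -> unitv u -> unitv u' ->
  small (fun t => exists x, N x /\ pt c u t = pt c' u' x).
Proof.
  intros HN Hu Hu'; unfold unitv in *.
  destruct (Req_dec (fst u * snd u' - snd u * fst u') 0) as [Hd|Hd].
  - set (e := fst u * fst u' + snd u * snd u').
    assert (E1 : fst u' = e * fst u).
    { replace (e * fst u) with (fst u' * (fst u * fst u + snd u * snd u) + snd u * (fst u * snd u' - snd u * fst u')) by (unfold e; ring).
      rewrite Hu, Hd; ring. }
    assert (E2 : snd u' = e * snd u).
    { replace (e * snd u) with (snd u' * (fst u * fst u + snd u * snd u) - fst u * (fst u * snd u' - snd u * fst u')) by (unfold e; ring).
      rewrite Hu, Hd; ring. }
    assert (He : e * e = 1) by (rewrite E1, E2 in Hu'; nra).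
    assert (Hs : e = 1 \/ e = -1) by (destruct (Rle_or_lt 0 e); [left|right]; nra).
    set (s0 := fst c * fst u + snd c * snd u - (fst c' * fst u + snd c' * snd u)).
    apply small_sub with (fun t => N (e * t + e * s0)).
    + apply small_affine; auto.
    + intros t [x [Hx E]]; unfold pt in E; injection E; intros F2 F1.
      replace (e * t + e * s0) with x; auto.
      assert (K : fst u * (fst c + t * fst u) + snd u * (snd c + t * snd u) =
                  fst u * (fst c' + x * fst u') + snd u * (snd c' + x * snd u')) by (rewrite F1, F2; ring).
      assert (K2 : t + s0 = x * e).
      { unfold s0, e; replace t with (t * (fst u * fst u + snd u * snd u)) by (rewrite Hu; ring).
        revert K; clear; intros K; lra. }
      replace (e * t + e * s0) with (e * (t + s0)) by ring. rewrite K2.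
      replace (e * (x * e)) with (x * (e * e)) by ring. rewrite He; ring.
  - apply small_subsingleton; intros t1 t2 [x1 [_ E1]] [x2 [_ E2]].
    unfold pt in *; injection E1; injection E2; intros G4 G3 G2 G1.
    apply Rminus_diag_uniq; apply (Rmult_eq_reg_r (fst u * snd u' - snd u * fst u')); [|auto].
    assert (H1 : (t1 - t2) * fst u = (x1 - x2) * fst u') by lra.
    assert (H2 : (t1 - t2) * snd u = (x1 - x2) * snd u') by lra.
    replace ((t1 - t2) * (fst u * snd u' - snd u * fst u')) with
      (((t1 - t2) * fst u) * snd u' - ((t1 - t2) * snd u) * fst u') by ring.
    rewrite H1, H2; ring.
Qed.


Arguments to_nat : simpl never.

Fixpoint ps (f : nat -> bool) (N : nat) : R :=
  match N with O => 0 | S N' => ps f N' + (if f N' then 1 else 0) / 3 ^ (S N') end.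

Lemma three_pow_pos n : 0 < 3 ^ n.
Proof. apply pow_lt; lra. Qed.

Lemma ps_tail f k j : ps f (k + j) <= ps f k + (1/2) / 3 ^ k - (1/2) / 3 ^ (k + j).
Proof.
  induction j.
  - rewrite Nat.add_0_r; lra.
  - replace (k + S j)%nat with (S (k + j)) by lia.
    change (ps f (S (k + j))) with (ps f (k + j) + (if f (k + j)%nat then 1 else 0) / 3 ^ S (k + j)).
    assert (H3 := three_pow_pos (k + j)).
    assert (E : (1/2) / 3 ^ (k + j) - (1/2) / 3 ^ (S (k + j)) = 1 / 3 ^ (S (k + j)))
      by (simpl; field; lra).
    assert ((if f (k + j)%nat then 1 else 0) / 3 ^ S (k + j) <= 1 / 3 ^ S (k + j)).
    { apply Rmult_le_compat_r; [apply Rlt_le, Rinv_0_lt_compat; simpl; lra|destruct (f _); lra]. }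
    lra.
Qed.

Lemma ps_mono f N M : (N <= M)%nat -> ps f N <= ps f M.
Proof.
  intros H; induction H; [lra|].
  change (ps f (S m)) with (ps f m + (if f m then 1 else 0) / 3 ^ S m).
  assert (0 <= (if f m then 1 else 0) / 3 ^ S m).
  { apply Rmult_le_pos; [destruct (f m); lra|apply Rlt_le, Rinv_0_lt_compat, three_pow_pos]. }
  lra.
Qed.

Lemma ps_bound f N : ps f N <= (1/2) / 3 ^ 0.
Proof.
  pose proof (ps_tail f 0 N); simpl in *.
  assert (0 < (1/2) / 3 ^ N) by (apply Rdiv_lt_0_compat; [lra|apply three_pow_pos]). lra.
Qed.

Lemma ps_agree f g k : (forall m, (m < k)%nat -> f m = g m) -> ps f k = ps g k.
Proof.
  induction k; intros H; simpl; [reflexivity|].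
  rewrite IHk by (intros; apply H; lia). rewrite (H k) by lia. reflexivity.
Qed.

Lemma ps_bnd f : bound (fun x => exists N, x = ps f N).
Proof. exists ((1/2) / 3 ^ 0); intros x [N ->]; apply ps_bound. Qed.

Lemma ps_ne f : exists x, (fun x => exists N, x = ps f N) x.
Proof. exists 0, 0%nat; reflexivity. Qed.

Definition dec (f : nat -> bool) : R :=
  proj1_sig (completeness (fun x => exists N, x = ps f N) (ps_bnd f) (ps_ne f)).

Lemma dec_ge f N : ps f N <= dec f.
Proof. unfold dec; apply (proj1 (proj2_sig (completeness _ (ps_bnd f) (ps_ne f)))); exists N; auto. Qed.

Lemma dec_le f M : (forall N, ps f N <= M) -> dec f <= M.
Proof.
  intros H; unfold dec; apply (proj2 (proj2_sig (completeness _ (ps_bnd f) (ps_ne f)))).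
  intros x [N ->]; auto.
Qed.

Lemma least_ex (P : nat -> Prop) : (exists n, P n) -> exists k, P k /\ forall m, (m < k)%nat -> ~ P m.
Proof.
  intros [n Hn]. revert Hn; induction n as [n IH] using lt_wf_ind; intros Hn.
  destruct (classic (exists m, (m < n)%nat /\ P m)) as [[m [Hm Pm]]|H].
  - apply (IH m Hm Pm).
  - exists n; split; auto; intros m Hm Pm; apply H; eauto.
Qed.

Lemma dec_lt f g k : (forall m, (m < k)%nat -> f m = g m) -> f k = true -> g k = false -> dec g < dec f.
Proof.
  intros Hag Hf Hg.
  assert (E1 : ps f (S k) = ps g k + 1 / 3 ^ S k) by (simpl; rewrite Hf, (ps_agree f g k Hag); reflexivity).
  assert (E2 : ps g (S k) = ps g k) by (simpl; rewrite Hg; unfold Rdiv; ring).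
  assert (H1 := dec_ge f (S k)).
  assert (H2 : dec g <= ps g k + (1/2) / 3 ^ S k).
  { apply dec_le; intros N. destruct (Nat.le_gt_cases N (S k)) as [HN|HN].
    - pose proof (ps_mono g _ _ HN).
      assert (0 < (1/2) / 3 ^ S k) by (apply Rdiv_lt_0_compat; [lra|apply three_pow_pos]). lra.
    - replace N with (S k + (N - S k))%nat by lia. pose proof (ps_tail g (S k) (N - S k)).
      assert (0 < (1/2) / 3 ^ (S k + (N - S k))) by (apply Rdiv_lt_0_compat; [lra|apply three_pow_pos]). lra. }
  assert (1 / 3 ^ S k > (1/2) / 3 ^ S k).
  { assert (H3 := three_pow_pos (S k)). apply Rmult_lt_compat_r; [apply Rinv_0_lt_compat; auto|lra]. }
  lra.
Qed.

Lemma dec_inj f g : dec f = dec g -> f = g.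
Proof.
  intros E; apply NNPP; intros Hne.
  assert (Hex : exists n, f n <> g n).
  { apply NNPP; intros H; apply Hne; apply functional_extensionality; intros n; apply NNPP; intros H'; apply H; eauto. }
  destruct (least_ex _ Hex) as [k [Hk Hmin]].
  assert (Hag : forall m, (m < k)%nat -> f m = g m) by (intros m Hm; apply NNPP; apply Hmin; auto).
  destruct (f k) eqn:Ef, (g k) eqn:Eg; try congruence.
  - pose proof (dec_lt f g k Hag Ef Eg); lra.
  - assert (Hag' : forall m, (m < k)%nat -> g m = f m) by (intros; symmetry; auto).
    pose proof (dec_lt g f k Hag' Eg Ef); lra.
Qed.

Definition qenum (n : nat) : Q :=
  let (a, m) := of_nat n in let (b, s) := of_nat m in
  Qmake (if Nat.eqb s 0 then Z.of_nat a else (- Z.of_nat a)%Z) (Pos.of_succ_nat b).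

Lemma qenum_surj q : exists n, qenum n = q.
Proof.
  destruct q as [z p].
  destruct (Pos2Nat.is_succ p) as [b Hb].
  exists (to_nat (Z.abs_nat z, to_nat (b, if (z <? 0)%Z then 1%nat else 0%nat))).
  unfold qenum; rewrite !cancel_of_to.
  f_equal; [|apply SuccNat2Pos.inv; auto].
  destruct (Z.ltb_spec z 0); simpl; lia.
Qed.

Lemma rat_between x y : x < y -> exists q, x < Q2R q < y.
Proof.
  intros Hxy.
  destruct (INR_archimed (y - x) 1) as [N HN]; [lra|].
  set (n := S N).
  assert (Hn : INR n * (y - x) > 1).
  { unfold n; rewrite S_INR; pose proof (pos_INR N); nra. }
  assert (Hpos : 0 < INR n) by (unfold n; apply lt_0_INR; lia).
  destruct (archimed (x * INR n)) as [H1 H2].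
  exists (Qmake (up (x * INR n)) (Pos.of_succ_nat N)).
  unfold Q2R; cbn [Qnum Qden]. rewrite Znat.Zpos_P_of_succ_nat, succ_IZR, <- INR_IZR_INZ.
  replace (INR N + 1) with (INR n) by (unfold n; rewrite S_INR; ring).
  assert (Ee : IZR (up (x * INR n)) * / INR n * INR n = IZR (up (x * INR n))) by (field; lra).
  assert (Ey : INR n * (y - x) = y * INR n - x * INR n) by ring.
  split.
  - apply Rmult_lt_reg_r with (INR n); auto. rewrite Ee; lra.
  - apply Rmult_lt_reg_r with (INR n); auto. rewrite Ee; lra.
Qed.

Definition rho (x : R) : nat -> bool :=
  fun n => if Rlt_dec (Q2R (qenum n)) x then true else false.

Lemma rho_inj x y : rho x = rho y -> x = y.
Proof.
  intros E.
  assert (K : forall x y, x < y -> rho x <> rho y).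
  { clear; intros x y Hxy E. destruct (rat_between _ _ Hxy) as [q Hq].
    destruct (qenum_surj q) as [n Hn].
    assert (F := equal_f E n); unfold rho in F; rewrite Hn in F.
    destruct (Rlt_dec (Q2R q) x), (Rlt_dec (Q2R q) y); try discriminate; lra. }
  destruct (total_order_T x y) as [[H|H]|H]; auto.
  - exfalso; apply (K x y H E).
  - exfalso; apply (K y x H); auto.
Qed.

Definition Enc (h : nat -> R) : R :=
  dec (fun n => rho (h (fst (of_nat n))) (snd (of_nat n))).

Lemma Enc_inj h h' : Enc h = Enc h' -> h = h'.
Proof.
  unfold Enc; intros E; apply dec_inj in E.
  apply functional_extensionality; intros i; apply rho_inj, functional_extensionality; intros j.
  assert (F := equal_f E (to_nat (i, j))); simpl in F; rewrite cancel_of_to in F; exact F.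
Qed.

Lemma Enc_app h h' : Enc h = Enc h' -> forall n, h n = h' n.
Proof. intros E; apply Enc_inj in E; subst; auto. Qed.

Lemma R_uncountable : ~ cnt (fun _ : R => True).
Proof.
  intros [f Hf].
  set (g := fun h => f (dec h)).
  assert (Hg : forall h1 h2, g h1 = g h2 -> h1 = h2) by (intros; apply dec_inj, Hf; auto).
  set (inv := fun n => epsilon (inhabits (fun _ : nat => true)) (fun h => g h = n)).
  set (d := fun n => negb (inv n n)).
  assert (Hinv : inv (g d) = d).
  { apply Hg; unfold inv; apply (epsilon_spec (inhabits (fun _ : nat => true)) (fun h => g h = g d)); eauto. }
  assert (F : d (g d) = negb (d (g d))).
  { change (d (g d)) with (negb (inv (g d) (g d))) at 1. rewrite Hinv; reflexivity. }
  destruct (d (g d)); discriminate.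
Qed.


Arguments to_nat : simpl never.

Inductive bcode : Type :=
  | BI (c d : R) | BC (b : bcode) | BU (f : nat -> bcode).

Fixpoint bset (b : bcode) : R -> Prop :=
  match b with
  | BI c d => fun x => c < x < d
  | BC b' => fun x => ~ bset b' x
  | BU f => fun x => exists n, bset (f n) x
  end.

Lemma borel_code B : borel B -> exists b, forall x, B x <-> bset b x.
Proof.
  induction 1 as [c d|B HB [b Hb]|F HF IH].
  - exists (BI c d); simpl; tauto.
  - exists (BC b); simpl; intros x; rewrite Hb; tauto.
  - assert (Hc : forall n, {b : bcode | forall x, F n x <-> bset b x})
      by (intros n; apply constructive_indefinite_description, IH).
    exists (BU (fun n => proj1_sig (Hc n))); simpl; intros x; split.
    + intros [n Hn]; exists n; apply (proj2_sig (Hc n)); auto.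
    + intros [n Hn]; exists n; apply (proj2_sig (Hc n)); auto.
Qed.

Definition E3 (t : nat) (x y : R) : R :=
  Enc (fun k => match k with O => INR t | S O => x | _ => y end).

Lemma E3_inj t x y t' x' y' : E3 t x y = E3 t' x' y' -> t = t' /\ x = x' /\ y = y'.
Proof.
  unfold E3; intros H; pose proof (Enc_app _ _ H) as F.
  pose proof (F 0%nat); pose proof (F 1%nat); pose proof (F 2%nat); simpl in *.
  split; [apply INR_eq|split]; auto.
Qed.

Fixpoint encB (b : bcode) (s : list nat) : R :=
  match b, s with
  | BI c d, nil => E3 1 c d
  | BC _, nil => E3 2 0 0
  | BU _, nil => E3 3 0 0
  | BI _ _, _ :: _ => E3 0 0 0
  | BC b', _ :: s' => encB b' s'
  | BU f, n :: s' => encB (f n) s'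
  end.

Lemma encB_inj b1 b2 : (forall s, encB b1 s = encB b2 s) -> b1 = b2.
Proof.
  revert b2; induction b1 as [c d|b1 IH|f IH]; intros [c' d'|b2|f2] H;
    pose proof (E3_inj _ _ _ _ _ _ (H nil)) as [Ht [Hx Hy]]; try discriminate.
  - subst; reflexivity.
  - f_equal; apply IH; intros s; apply (H (0%nat :: s)).
  - f_equal; apply functional_extensionality; intros n; apply IH; intros s; apply (H (n :: s)).
Qed.

Definition encLn (l : list nat) : nat := encL (map (fun n => (0%Q, n)) l).

Lemma encLn_inj l1 l2 : encLn l1 = encLn l2 -> l1 = l2.
Proof.
  unfold encLn; intros H; apply encL_inj in H. revert l2 H; induction l1; intros [|b l2]; simpl; intros H;
    try discriminate; auto. injection H; intros; f_equal; auto.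
Qed.

Definition decl (m : nat) : list nat := epsilon (inhabits nil) (fun l => encLn l = m).

Lemma decl_encLn l : decl (encLn l) = l.
Proof.
  apply encLn_inj; unfold decl.
  apply (epsilon_spec (inhabits nil) (fun l' => encLn l' = encLn l)); eauto.
Qed.

Definition codeB (b : bcode) : R := Enc (fun m => encB b (decl m)).

Lemma codeB_inj b1 b2 : codeB b1 = codeB b2 -> b1 = b2.
Proof.
  unfold codeB; intros H; pose proof (Enc_app _ _ H) as F.
  apply encB_inj; intros s; specialize (F (encLn s)); cbv beta in F; rewrite decl_encLn in F; auto.
Qed.

Inductive task : Type :=
  | TNull (c u : R2) (a b : nat -> nat -> R)
  | TPos (c u : R2) (B : bcode)
  | TVec (v : R2).

Definition encR2 (v : R2) : R := Enc (fun k => match k with O => fst v | _ => snd v end).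

Lemma encR2_inj v w : encR2 v = encR2 w -> v = w.
Proof.
  unfold encR2; intros H; pose proof (Enc_app _ _ H) as F.
  pose proof (F 0%nat); pose proof (F 1%nat); simpl in *; destruct v, w; simpl in *; congruence.
Qed.

Definition encNN (a : nat -> nat -> R) : R := Enc (fun n => a (fst (of_nat n)) (snd (of_nat n))).

Lemma encNN_inj a b : encNN a = encNN b -> a = b.
Proof.
  unfold encNN; intros H; pose proof (Enc_app _ _ H) as F.
  apply functional_extensionality; intros i; apply functional_extensionality; intros j.
  specialize (F (to_nat (i, j))); cbv beta in F; rewrite cancel_of_to in F; auto.
Qed.

Definition E5 (t : nat) (x1 x2 x3 x4 : R) : R :=
  Enc (fun k => match k with O => INR t | 1%nat => x1 | 2%nat => x2 | 3%nat => x3 | _ => x4 end).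

Lemma E5_inj t x1 x2 x3 x4 t' y1 y2 y3 y4 : E5 t x1 x2 x3 x4 = E5 t' y1 y2 y3 y4 ->
  t = t' /\ x1 = y1 /\ x2 = y2 /\ x3 = y3 /\ x4 = y4.
Proof.
  unfold E5; intros H; pose proof (Enc_app _ _ H) as F.
  pose proof (F 0%nat); pose proof (F 1%nat); pose proof (F 2%nat); pose proof (F 3%nat); pose proof (F 4%nat);
  simpl in *; repeat split; auto; apply INR_eq; auto.
Qed.

Definition encT (k : task) : R :=
  match k with
  | TNull c u a b => E5 0 (encR2 c) (encR2 u) (encNN a) (encNN b)
  | TPos c u B => E5 1 (encR2 c) (encR2 u) (codeB B) 0
  | TVec v => E5 2 (encR2 v) 0 0 0
  end.

Lemma encT_inj k1 k2 : encT k1 = encT k2 -> k1 = k2.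
Proof.
  destruct k1, k2; simpl; intros H; apply E5_inj in H; destruct H as [Ht [H1 [H2 [H3 H4]]]];
    try discriminate; f_equal;
    try (apply encR2_inj; auto); try (apply encNN_inj; auto); try (apply codeB_inj; auto).
Qed.

Definition encTR (k : task) (r : R) : R := Enc (fun n => match n with O => encT k | _ => r end).

Lemma encTR_inj k r k' r' : encTR k r = encTR k' r' -> k = k' /\ r = r'.
Proof.
  unfold encTR; intros H; pose proof (Enc_app _ _ H) as F.
  pose proof (F 0%nat); pose proof (F 1%nat); simpl in *; split; auto; apply encT_inj; auto.
Qed.

(* task assignment with uncountable fibers *)
Definition tau (x : R) : task :=
  match excluded_middle_informative (exists k r, encTR k r = x) with
  | left H => proj1_sig (constructive_indefinite_description _ H)
  | right _ => TVec (0, 0)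
  end.

Lemma tau_encTR k r : tau (encTR k r) = k.
Proof.
  unfold tau; destruct excluded_middle_informative as [H|H]; [|exfalso; eauto].
  destruct (constructive_indefinite_description _ H) as [k' [r' E]]; simpl.
  apply encTR_inj in E; tauto.
Qed.


Arguments to_nat : simpl never.

Definition NC (a b : nat -> nat -> R) (x : R) : Prop := forall k, exists n, a k n <= x <= b k n.

Lemma null_code N : lebesgue_null N -> exists a b, (forall x, N x -> NC a b x) /\ lebesgue_null (NC a b).
Proof.
  intros HN.
  assert (Hc : forall k, {ab : (nat -> R) * (nat -> R) | interval_cover (fst ab) (snd ab) N /\
              forall n, cover_len (fst ab) (snd ab) n < 1 / INR (S k)}).
  { intros k; apply constructive_indefinite_description.
    destruct (HN (1 / INR (S k))) as [a [b H]]; [apply Rdiv_lt_0_compat; [lra|apply lt_0_INR; lia]|].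
    exists (a, b); exact H. }
  exists (fun k => fst (proj1_sig (Hc k))), (fun k => snd (proj1_sig (Hc k))); split.
  - intros x Hx k; destruct (proj2_sig (Hc k)) as [[_ H] _]; apply H; auto.
  - intros eps Heps.
    destruct (INR_archimed eps 1) as [k Hk]; [lra|].
    exists (fst (proj1_sig (Hc k))), (snd (proj1_sig (Hc k))).
    destruct (proj2_sig (Hc k)) as [[H1 H2] H3]; split; [split|]; auto.
    intros n; apply Rlt_le_trans with (1 / INR (S k)); auto.
    rewrite S_INR. assert (0 <= INR k) by apply pos_INR.
    apply Rmult_le_reg_r with (INR k + 1); [lra|]. unfold Rdiv. rewrite Rmult_assoc, Rinv_l by lra. nra.
Qed.

Lemma cnt_pairs (X : R -> Prop) (P : R -> nat -> Prop) :
  cnt X -> cnt (fun p : R * nat => X (fst p) /\ P (fst p) (snd p)).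
Proof.
  intros [g Hg]; exists (fun p => to_nat (g (fst p), snd p)).
  intros [a i] [b j] [Ha _] [Hb _] E; simpl in *; apply to_nat_inj in E; injection E; intros; subst.
  f_equal; apply Hg; auto.
Qed.

Definition getn (l : list R2) (i : nat) : R2 := match nth_error l i with Some z => z | None => (0, 0) end.

Lemma cnt_stage_points (X : R -> Prop) (h : R -> list R2) :
  cnt X -> cnt (fun w => exists a i, X a /\ nth_error (h a) i = Some w).
Proof.
  intros Hx.
  apply cnt_sub with (fun w => exists p, (fun p : R * nat => X (fst p) /\ (fun a i => exists z, nth_error (h a) i = Some z) (fst p) (snd p)) p
                                  /\ w = getn (h (fst p)) (snd p)).
  - apply cnt_image, (cnt_pairs X (fun a i => exists z, nth_error (h a) i = Some z)); auto.
  - intros w [a [i [Ha Hi]]]; exists (a, i); simpl; split; [split; eauto|]. unfold getn; rewrite Hi; auto.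
Qed.

Section Construction.
Variable lt : R -> R -> Prop.
Hypothesis Hwf : well_founded lt.
Hypothesis Htri : forall x y, lt x y \/ x = y \/ lt y x.
Hypothesis Htr : forall x y z, lt x y -> lt y z -> lt x z.
Hypothesis Hirr : forall x, ~ lt x x.
Hypothesis Hcnt : forall x, cnt (fun y => lt y x).

Definition Forb (al : R) (z : R2) : Prop :=
  exists be, lt be al /\ exists c u a b, tau be = TNull c u a b /\ unitv u /\ lebesgue_null (NC a b) /\
    exists x, NC a b x /\ z = pt c u x.

Definition Valid (al : R) (D : R2 -> Prop) (l : list R2) : Prop :=
  (forall i z, nth_error l i = Some z ->
     ~ spanS (fun w => D w \/ exists j, (j < i)%nat /\ nth_error l j = Some w) z) /\
  (forall z, In z l -> ~ Forb al z) /\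
  match tau al with
  | TPos c u b => unitv u -> positive_measure (bset b) -> exists t, bset b t /\ In (pt c u t) l
  | TVec v => spanS (fun w => D w \/ In w l) v
  | TNull _ _ _ _ => True
  end.

Lemma forb_small al c u : unitv u -> small (fun t => Forb al (pt c u t)).
Proof.
  intros Hu.
  apply small_sub with (fun t => exists be, lt be al /\ (fun be t => exists c' u' a b, tau be = TNull c' u' a b /\ unitv u' /\
      lebesgue_null (NC a b) /\ exists x, NC a b x /\ pt c u t = pt c' u' x) be t).
  - apply small_cnt_union; auto. intros be _.
    destruct (classic (exists c' u' a b, tau be = TNull c' u' a b /\ unitv u' /\ lebesgue_null (NC a b)))
      as [[c' [u' [a [b [Ht [Hu' Hn]]]]]]|Hno].
    + apply small_sub with (fun t => exists x, NC a b x /\ pt c u t = pt c' u' x).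
      * apply line_inter_small; auto. apply null_small; auto.
      * intros t [c2 [u2 [a2 [b2 [Ht2 [_ [_ Hx]]]]]]]. rewrite Ht in Ht2; injection Ht2; intros; subst; auto.
    + apply small_subsingleton; intros x y [c2 [u2 [a2 [b2 [Ht2 [H1 [H2 _]]]]]]]; exfalso; apply Hno; eauto 8.
  - intros t [be [Hbe [c' [u' [a [b [H1 [H2 [H3 [x [H4 H5]]]]]]]]]]]; exists be; split; auto.
    exists c', u', a, b; repeat split; auto; exists x; auto.
Qed.

Lemma span_small D c u : cnt D -> unitv u -> small (fun t => spanS D (pt c u t)).
Proof.
  intros HD Hu; apply small_cnt, cnt_preimage; [apply cnt_span; auto|].
  intros; eapply pt_inj; eauto.
Qed.

Definition e1 : R2 := (1, 0).
Definition me1 : R2 := (-1, 0).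
Lemma unit_e1 : unitv e1. Proof. unfold unitv, e1; simpl; ring. Qed.
Lemma unit_me1 : unitv me1. Proof. unfold unitv, me1; simpl; ring. Qed.

Lemma valid_exists al D : cnt D -> exists l, Valid al D l.
Proof.
  intros HD. unfold Valid. destruct (tau al) as [c u a b|c u b|v] eqn:Ht.
  - exists nil; split; [|split].
    + intros [|i] z H; discriminate.
    + intros z [].
    + exact I.
  - destruct (classic (unitv u /\ positive_measure (bset b))) as [[Hu Hp]|Hno].
    + destruct (posm_pick (bset b) _ Hp (small_union2 _ _ (span_small D c u HD Hu) (forb_small al c u Hu)))
        as [t [Hb Hnot]].
      exists (pt c u t :: nil); split; [|split].
      * intros [|[|i]] z Hz; simpl in Hz; try discriminate. injection Hz; intros <-.
        intros Hs; apply Hnot; left. eapply span_mono; [|exact Hs].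
        intros w [Hw|[j [Hj _]]]; [auto|lia].
      * intros z [<-|[]] Hf; apply Hnot; right; auto.
      * intros _ _; exists t; split; [auto|left; auto].
    + exists nil; split; [|split].
      * intros [|i] z H; discriminate.
      * intros z [].
      * intros Hu Hp; exfalso; auto.
  - destruct (classic (spanS D v)) as [Hv|Hv].
    + exists nil; split; [|split].
      * intros [|i] z H; discriminate.
      * intros z [].
      * eapply span_mono; [|exact Hv]; auto.
    + assert (HDv : cnt (fun w => D w \/ w = v)) by (apply cnt_union; [auto|apply cnt_single]).
      destruct (R_not_small _ (small_union2 _ _ (span_small _ (0, 0) e1 HDv unit_e1)
                 (small_union2 _ _ (forb_small al (0, 0) e1 unit_e1) (forb_small al v me1 unit_me1))))
        as [t Ht'].
      set (z := pt (0, 0) e1 t).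
      assert (Ew : pt v me1 t = vsub v z) by (unfold z, pt, vsub, e1, me1; simpl; peq).
      assert (Hz1 : ~ spanS (fun w => D w \/ w = v) z) by (intros H; apply Ht'; left; auto).
      exists (z :: vsub v z :: nil); split; [|split].
      * intros [|[|[|i]]] w Hw; simpl in Hw; try discriminate; injection Hw; intros <-.
        -- intros Hs; apply Hz1; eapply span_mono; [|exact Hs].
           intros w [Hw'|[j [Hj _]]]; [auto|lia].
        -- intros Hs; apply (vec_exchange D v z Hv Hz1).
           eapply span_mono; [|exact Hs].
           intros w [Hw'|[j [Hj Hj']]]; [auto|].
           destruct j; [simpl in Hj'; injection Hj'; auto|lia].
      * intros w [<-|[<-|[]]] Hf; apply Ht'; right; [left; auto|right; rewrite Ew; auto].
      * assert (S : spanS (fun w => D w \/ In w (z :: vsub v z :: nil)) (vadd z (vsub v z)))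
          by (apply span_add; apply span_in; right; simpl; auto).
        replace (vadd z (vsub v z)) with v in S by (unfold vadd, vsub; peq). exact S.
Qed.

Definition Dh (al : R) (h : R -> list R2) : R2 -> Prop := fun w => exists be, lt be al /\ In w (h be).

Definition step (al : R) (hist : R -> list R2) : list R2 :=
  epsilon (inhabits nil) (Valid al (Dh al hist)).

Definition Fh : R -> list R2 :=
  Fix Hwf (fun _ => list R2)
    (fun al rec => step al (fun be => match excluded_middle_informative (lt be al) with
                                      | left p => rec be p | right _ => nil end)).

Lemma Fh_eq al : Fh al = step al (fun be => match excluded_middle_informative (lt be al) with
                                           | left _ => Fh be | right _ => nil end).
Proof.
  unfold Fh at 1; rewrite Fix_eq.
  - reflexivity.
  - intros x f g Hfg; f_equal; apply functional_extensionality; intros y.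
    destruct (excluded_middle_informative (lt y x)); auto.
Qed.

Lemma Dh_restrict al : Dh al (fun be => match excluded_middle_informative (lt be al) with
                                        | left _ => Fh be | right _ => nil end) = Dh al Fh.
Proof.
  apply functional_extensionality; intros w; apply propositional_extensionality; unfold Dh; split.
  - intros [be [H1 H2]]; exists be; split; auto; destruct (excluded_middle_informative _); [auto|contradiction].
  - intros [be [H1 H2]]; exists be; split; auto; destruct (excluded_middle_informative _); [auto|contradiction].
Qed.

Lemma Dh_cnt al : cnt (Dh al Fh).
Proof.
  apply cnt_sub with (fun w => exists a i, (fun y => lt y al) a /\ nth_error (Fh a) i = Some w).
  - apply cnt_stage_points; auto.
  - intros w [be [H1 H2]]; destruct (In_nth_error _ _ H2) as [i Hi]; exists be, i; auto.
Qed.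

Lemma Fh_valid al : Valid al (Dh al Fh) (Fh al).
Proof.
  rewrite (Fh_eq al). unfold step. rewrite Dh_restrict.
  apply (epsilon_spec (inhabits nil) (Valid al (Dh al Fh))), valid_exists, Dh_cnt.
Qed.

Definition Aset : R2 -> Prop := fun z => exists al, In z (Fh al).

Lemma stage_unique z a1 a2 : In z (Fh a1) -> In z (Fh a2) -> a1 = a2.
Proof.
  assert (K : forall a1 a2, lt a1 a2 -> In z (Fh a1) -> In z (Fh a2) -> False).
  { intros b1 b2 Hlt H1 H2. destruct (In_nth_error _ _ H2) as [i Hi].
    destruct (Fh_valid b2) as [V1 _]. apply (V1 i z Hi). apply span_in; left; exists b1; auto. }
  intros H1 H2; destruct (Htri a1 a2) as [H|[H|H]]; auto; exfalso; eauto.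
Qed.

Lemma A_hamel : hamel_basis Aset.
Proof.
  split.
  - apply (indep_rank (R * nat) Aset (fun z k => nth_error (Fh (fst k)) (snd k) = Some z)
             (fun k1 k2 => lt (fst k1) (fst k2) \/ (fst k1 = fst k2 /\ (snd k1 < snd k2)%nat))).
    + intros z [al Hz]; destruct (In_nth_error _ _ Hz) as [i Hi]; exists (al, i); auto.
    + intros z w k H1 H2; rewrite H1 in H2; injection H2; auto.
    + intros [a i] [b j]; simpl. destruct (Htri a b) as [H|[H|H]]; auto. subst.
      destruct (Nat.lt_trichotomy i j) as [H|[H|H]]; [left; right; auto|right; left; subst; auto|right; right; right; auto].
    + intros [a i] [b j] [c k]; simpl; intros [H1|[E1 H1]] [H2|[E2 H2]]; subst; eauto.
      right; split; auto; lia.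
    + intros z [al i] Hz; simpl in Hz. destruct (Fh_valid al) as [V1 _].
      intros Hs; apply (V1 i z Hz). eapply span_mono; [|exact Hs].
      intros w [[be j] [Hw [Hlt|[Eq Hlt]]]]; simpl in *.
      * left; exists be; split; auto; eapply nth_error_In; eauto.
      * subst; right; exists j; auto.
  - intros v. set (al := encTR (TVec v) 0).
    destruct (Fh_valid al) as [_ [_ V3]]. unfold al in V3 at 1; rewrite tau_encTR in V3.
    eapply span_mono; [|exact V3].
    intros w [[be [_ H]]|H]; [exists be; auto|exists al; auto].
Qed.

Lemma A_sierp_null c u N : unitv u -> lebesgue_null N -> cnt (fun x => Aset (pt c u x) /\ N x).
Proof.
  intros Hu HN. destruct (null_code N HN) as [a [b [HNab Hnull]]].
  set (b0 := encTR (TNull c u a b) 0).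
  apply cnt_sub with (fun x => (fun w => exists a' i, (fun y => y = b0 \/ lt y b0) a' /\ nth_error (Fh a') i = Some w) (pt c u x)).
  - apply (cnt_preimage (fun w => exists a' i, (fun y => y = b0 \/ lt y b0) a' /\ nth_error (Fh a') i = Some w) (pt c u));
      [|intros; eapply pt_inj; eauto].
    apply cnt_stage_points. apply cnt_union; [apply cnt_single|auto].
  - intros x [[al Hal] Hx]; destruct (In_nth_error _ _ Hal) as [i Hi]; exists al, i; split; auto.
    destruct (Htri al b0) as [H|[H|H]]; auto.
    exfalso. destruct (Fh_valid al) as [_ [V2 _]]. apply (V2 _ Hal).
    exists b0; split; auto. exists c, u, a, b; repeat split; auto.
    + unfold b0; apply tau_encTR.
    + exists x; split; auto.
Qed.

Lemma A_strong_pos c u B : unitv u -> borel B -> positive_measure B -> ~ cnt (fun x => Aset (pt c u x) /\ B x).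
Proof.
  intros Hu HB Hp [f Hf].
  destruct (borel_code B HB) as [b Hb].
  assert (EB : B = bset b) by (apply functional_extensionality; intros x; apply propositional_extensionality; auto).
  subst B.
  assert (Hpick : forall r, exists t, bset b t /\ In (pt c u t) (Fh (encTR (TPos c u b) r))).
  { intros r; destruct (Fh_valid (encTR (TPos c u b) r)) as [_ [_ V3]]; rewrite tau_encTR in V3; auto. }
  apply R_uncountable.
  exists (fun r => f (epsilon (inhabits 0) (fun t => bset b t /\ In (pt c u t) (Fh (encTR (TPos c u b) r))))).
  intros r1 r2 _ _ E.
  pose proof (epsilon_spec (inhabits 0) _ (Hpick r1)) as [B1 I1].
  pose proof (epsilon_spec (inhabits 0) _ (Hpick r2)) as [B2 I2].
  apply Hf in E; [|split; [exists (encTR (TPos c u b) r1); auto|auto]|split; [exists (encTR (TPos c u b) r2); auto|auto]].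
  rewrite E in I1. pose proof (stage_unique _ _ _ I1 I2) as Es.
  apply encTR_inj in Es; tauto.
Qed.

Lemma A_strong c u : CH -> unitv u -> strong_sierpinski (fun x => Aset (pt c u x)).
Proof.
  intros HCH Hu. split; [split|].
  - destruct (HCH (fun x => Aset (pt c u x))) as [Hc|Hc]; auto.
    exfalso; apply (A_strong_pos c u fullR Hu fullR_borel fullR_posm).
    apply cnt_sub with (fun x => Aset (pt c u x)); [exact Hc|tauto].
  - intros N HN; apply A_sierp_null; auto.
  - intros B HB Hp Hc; apply (A_strong_pos c u B Hu HB Hp Hc).
Qed.

End Construction.

From mathcomp Require wochoice boolp Rstruct.

Module WO.
Import ssreflect ssrbool eqtype Rstruct.
Lemma R_wo : exists le : R -> R -> Prop,
  (forall x y, le x y \/ le y x) /\ (forall x y, le x y -> le y x -> x = y) /\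
  (forall x y z, le x y -> le y z -> le x z) /\
  (forall P : R -> Prop, (exists x, P x) -> exists z, P z /\ forall x, P x -> le z x).
Proof.
case: (wochoice.well_ordering_principle R) => r Hr.
have Hmin : forall P : R -> Prop, (exists x, P x) -> exists z, P z /\ forall x, P x -> r z x.
  move=> P [x Px].
  have ne : wochoice.nonempty (fun y => boolp.asbool (P y)).
    by exists x; apply/boolp.asboolP.
  case: (Hr _ ne) => z [[Hz Hlb] _]; exists z; split.
    by move: Hz => /boolp.asboolP.
  by move=> y Py; apply: Hlb; apply/boolp.asboolP.
have refl : forall w, r w w.
  move=> w; case: (Hmin (fun z => z = w)); first by exists w.
  by move=> z' [-> H']; apply H'.
have anti : forall x y, r x y -> r y x -> x = y.
  move=> x y Hxy Hyx.
  have ne : wochoice.nonempty (fun z => boolp.asbool (z = x \/ z = y)).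
    by exists x; apply/boolp.asboolP; left.
  case: (Hr _ ne) => z [_ Hu].
  have mx : wochoice.minimum_of r (fun z => boolp.asbool (z = x \/ z = y)) x.
    split; first by apply/boolp.asboolP; left.
    move=> w; move=> /boolp.asboolP [->|->] //.
  have my : wochoice.minimum_of r (fun z => boolp.asbool (z = x \/ z = y)) y.
    split; first by apply/boolp.asboolP; right.
    move=> w; move=> /boolp.asboolP [->|->] //.
  by rewrite -(Hu x mx) -(Hu y my).
exists (fun x y => r x y); split; [|split; [|split]].
- move=> x y; case: (Hmin (fun z => z = x \/ z = y)); first by exists x; left.
  by move=> z [[->|->] H]; [left|right]; apply: H; auto.
- exact: anti.
- move=> x y z Hxy Hyz.
  case: (Hmin (fun w => w = x \/ w = y \/ w = z)); first by exists x; left.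
  move=> m [Hm H].
  case: Hm => [e|[e|e]]; subst m; first by apply: H; auto.
  + have e : x = y by apply: anti => //; apply: H; auto.
    by rewrite e.
  + have e : y = z by apply: anti => //; apply: H; auto.
    by rewrite -e.
- exact: Hmin.
Qed.
End WO.

Lemma omega1_order : CH -> exists lt : R -> R -> Prop,
  well_founded lt /\ (forall x y, lt x y \/ x = y \/ lt y x) /\
  (forall x y z, lt x y -> lt y z -> lt x z) /\ (forall x, ~ lt x x) /\
  (forall x, cnt (fun y => lt y x)).
Proof.
  intros HCH. destruct WO.R_wo as [le [Htot [Hanti [Htr Hmin]]]].
  set (lt0 := fun x y => le x y /\ x <> y).
  assert (Hwf0 : well_founded lt0).
  { intros a; apply NNPP; intros Ha.
    destruct (Hmin (fun x => ~ Acc lt0 x)) as [z [Hz Hzm]]; [eauto|].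
    apply Hz; constructor; intros y [Hyz Hne]; apply NNPP; intros Hy.
    apply Hne, Hanti; auto. }
  assert (Htri0 : forall x y, lt0 x y \/ x = y \/ lt0 y x).
  { intros x y; destruct (classic (x = y)); [auto|]. destruct (Htot x y); [left|right; right]; split; auto. }
  assert (Htr0 : forall x y z, lt0 x y -> lt0 y z -> lt0 x z).
  { intros x y z [H1 N1] [H2 N2]; split; [apply (Htr x y z); auto|]. intros ->; apply N1, Hanti; auto. }
  destruct (classic (exists x, ~ cnt (fun y => lt0 y x))) as [Hbad|Hgood].
  - destruct (Hmin _ Hbad) as [x0 [Hx0 Hx0m]].
    destruct (HCH (fun y => lt0 y x0)) as [Hc|[phi [Hinj [Hin Hsurj]]]]; [contradiction|].
    exists (fun x y => lt0 (phi x) (phi y)); split; [|split; [|split; [|split]]].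
    + apply wf_inverse_image; auto.
    + intros x y; destruct (Htri0 (phi x) (phi y)) as [H|[H|H]]; auto.
    + intros x y z; apply Htr0.
    + intros x [_ H]; apply H; auto.
    + intros x. apply (cnt_preimage (fun z => lt0 z (phi x)) phi); [|auto].
      apply NNPP; intros Hb. destruct (Hin x) as [H1 H2].
      apply H2; apply Hanti; auto.
  - exists lt0; split; [|split; [|split; [|split]]]; auto.
    + intros x [_ H]; apply H; auto.
    + intros x; apply NNPP; intros H; apply Hgood; eauto.
Qed.

Theorem mainTheorem11 :
  CH ->
  exists A : R2 -> Prop,
    hamel_basis A /\
    forall (p d : R2), d <> (0, 0) ->
    forall T : R -> R2, isometry_onto T (line p d) ->
      strong_sierpinski (fun x => A (T x) /\ line p d (T x)).
Proof.
  intros HCH. destruct (omega1_order HCH) as [lt [Hwf [Htri [Htr [Hirr Hcnt]]]]].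
  exists (Aset lt Hwf). split.
  - apply A_hamel; auto.
  - intros p d Hd T [Hiso [Hline Hsurj]].
    destruct (isometry_affine T Hiso) as [Hu HT].
    replace (fun x => Aset lt Hwf (T x) /\ line p d (T x)) with
      (fun x => Aset lt Hwf (pt (T 0) (vsub (T 1) (T 0)) x)).
    + apply A_strong; auto.
    + apply functional_extensionality; intros x; apply propositional_extensionality.
      rewrite <- HT; split; [intros H; split; auto|tauto].
Qed.
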